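(* For every $\pi\in\mathfrak{S}_n$, \[\sum_{k\ge0}\Omega^{(\ell)}(\pi;k)\,t^k=\frac{(1+t)^n}{(1-t)^{n+1}}\left(\frac{4t}{(1+t)^2}\right)^{\operatorname{lpe}(\pi)}\] as formal power series in $t$.
   Context: $\mathfrak{S}_n$ is the symmetric group on $[n]$; permutations are words $(\pi(1),\dots,\pi(n))$. With $\pi(0)=\pi(n+1)=0$, a left peak of $\pi$ is a position $i$ with $1\le i<n$ and $\pi(i-1)<\pi(i)>\pi(i+1)$; $\operatorname{lpe}(\pi)$ is the number of left peaks. For an integer $k\ge0$ let $Z_k$ be the totally ordered set $0<\bar1<1<\bar2<2<\dots<\bar k<k$, with $0$ and unbarred $j$ ''plus-type'' and barred $\bar j$ ''minus-type''. The left enriched order polynomial $\Omega^{(\ell)}(\pi;k)$ is the number of sequences $(a_1,\dots,a_n)\in Z_k^n$ with $a_1\le\dots\le a_n$ such that for every $s\in[n-1]$: if $\pi(s)<\pi(s+1)$ then $a_s<a_{s+1}$ or ($a_s=a_{s+1}$ is plus-type); if $\pi(s)>\pi(s+1)$ then $a_s<a_{s+1}$ or ($a_s=a_{s+1}$ is minus-type). *)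

(* Defs.v *)
From mathcomp Require Import all_boot all_order all_algebra.
From mathcomp Require Import fingroup perm.
Set Implicit Arguments. Unset Strict Implicit. Unset Printing Implicit Defensive.
Import GRing.Theory.

(* Permutations of [n] are 's : 'S_n' (permutations of 'I_n = {0,..,n-1});
   the word (pi(1),...,pi(n)) is pi(i) = (s (i-1)).+1.
   [pv s i] is pi(i) with the convention pi(0) = pi(n+1) = 0. *)
Definition pv (n : nat) (s : 'S_n) (i : nat) : nat :=
  nth 0%N (0%N :: [seq (val (s j)).+1 | j <- enum 'I_n] ++ [:: 0%N]) i.

Definition lpe (n : nat) (s : 'S_n) : nat :=
  count (fun i => (pv s i.-1 < pv s i) && (pv s i.+1 < pv s i))%N (iota 1 n.-1).

(* Z_k = {0 < bar1 < 1 < ... < bar k < k} is encoded by 'I_(2k+1):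
   0 |-> 0, bar j |-> 2j-1, j |-> 2j.  Plus-type = even, minus-type = odd. *)
Definition Zk (k : nat) := 'I_(2 * k).+1.
Definition plus_type (k : nat) (z : Zk k) : bool := ~~ odd z.
Definition minus_type (k : nat) (z : Zk k) : bool := odd z.

Definition lenr_cond (k : nat) (asc : bool) (x y : Zk k) : bool :=
  (x <= y)%N &&
  (if asc then (x < y)%N || ((x == y) && plus_type x)
          else (x < y)%N || ((x == y) && minus_type x)).

(* left enriched order polynomial Omega^(l)(pi; k):
   sequences a : [n] -> Z_k (a_{i+1} stored at index i) *)
Definition omega_l (n : nat) (s : 'S_n) (k : nat) : nat :=
  #|[set a : {ffun 'I_n -> Zk k} |
     [forall i : 'I_n, forall j : 'I_n, (val j == (val i).+1) ==>
        let asc := (pv s (val i).+1 < pv s (val j).+1)%N in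
        let desc := (pv s (val j).+1 < pv s (val i).+1)%N in
        (asc ==> lenr_cond true (a i) (a j)) &&
        (desc ==> lenr_cond false (a i) (a j))]]|.

Definition fps := nat -> rat.
Definition fps_mul (f g : fps) : fps :=
  fun m => (\sum_(i < m.+1) f i * g (m - i)%N)%R.
Definition fps_of_poly (p : {poly rat}) : fps := fun m => (p`_m)%R.

Definition fps_eq_frac (F : fps) (P Q : {poly rat}) : Prop :=
  (Q`_0 != 0)%R /\ fps_mul F (fps_of_poly Q) = fps_of_poly P.

(* Main.v *)
Require Import Defs.
From mathcomp Require Import all_boot all_order all_algebra.
From mathcomp Require Import fingroup perm.
From mathcomp Require Import zify ring.
From Stdlib Require Import FunctionalExtensionality.
Import GRing.Theory.

Module Aux.

Definition lc (b : bool) (x y : nat) : bool :=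
  (x <= y)%N && (if b then (x < y)%N || ((x == y) && ~~ odd x)
                 else (x < y)%N || ((x == y) && odd x)).

Definition par (b : bool) (v : nat) : bool := if b then ~~ odd v else odd v.

Fixpoint S (rw : seq bool) (v : nat) : nat :=
  match rw with
  | [::] => 1
  | b :: rw' => \sum_(u < v.+1) (lc b u v) * S rw' u
  end.

Definition st (rw : seq bool) : bool := head true rw.

Lemma sum_lc b v (f : nat -> nat) :
  \sum_(u < v.+1) (lc b u v) * f u = \sum_(u < v) f u + par b v * f v.
Proof.
rewrite big_ord_recr /=; congr (_ + _).
  by apply: eq_bigr => i _; rewrite /lc ltnW // ltn_ord; case: b; rewrite mul1n.
by rewrite /lc /par leqnn ltnn eqxx /=; case: b.
Qed.

Lemma S_cons b rw v : S (b :: rw) v = \sum_(u < v) S rw u + par b v * S rw v.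
Proof. by rewrite /= sum_lc. Qed.

Lemma stU rw j : st rw -> S rw (2 * j).+1 = S rw (2 * j).
Proof.
case: rw => [|b rw] // Hb; rewrite /st /= in Hb; rewrite Hb !S_cons big_ord_recr /= /par.
by rewrite oddM /= mul0n addn0 mul1n.
Qed.

Lemma stD rw j : ~~ st rw -> S rw (2 * j).+2 = S rw (2 * j).+1.
Proof.
case: rw => [|b rw] // Hb; rewrite /st /= in Hb; rewrite (negbTE Hb) !S_cons [in LHS]big_ord_recr /= /par.
by rewrite oddM /= mul0n addn0 mul1n.
Qed.

Lemma stD0 rw : ~~ st rw -> S rw 0 = 0.
Proof. by case: rw => [|b rw] // Hb; rewrite /st /= in Hb; rewrite (negbTE Hb) S_cons big_ord0. Qed.

Definition E rw j := S rw (2 * j).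

Lemma sum_half rw j :
  \sum_(u < 2 * j) S rw u = 2 * \sum_(i < j) E rw i + (~~ st rw) * E rw j.
Proof.
elim: j => [|j IH].
  rewrite !muln0 !big_ord0 /E muln0.
  by case: (boolP (st rw)) => H; [rewrite mul0n | rewrite stD0 // muln0].
have -> : 2 * j.+1 = (2 * j).+2 by lia.
rewrite !big_ord_recr /= IH /E.
case: (boolP (st rw)) => H /=.
  by rewrite stU // !mul0n !addn0; clear IH H; move: (\sum_(i < j) _) (S rw (2 * j)) => x y; lia.
have -> : 2 * j.+1 = (2 * j).+2 by lia.
rewrite stD // !mul1n; clear IH H; move: (\sum_(i < j) _) (S rw (2 * j)) (S rw _.+1) => x y z; lia.
Qed.

Lemma E_cons b rw j :
  E (b :: rw) j = 2 * \sum_(i < j) E rw i + (b + ~~ st rw) * E rw j.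
Proof.
rewrite {1}/E S_cons sum_half /par oddM -/(E rw j).
move: (\sum_(i < j) E rw i) (E rw j) => x y.
by case: b; case: (st rw) => /=; lia.
Qed.

Local Open Scope ring_scope.

Definition tr (m : nat) (e : nat -> nat) : {poly rat} := \poly_(i < m.+1) (e i)%:R.
Definition eqm m (p q : {poly rat}) := forall i, (i <= m)%N -> p`_i = q`_i.

Lemma eqm_mulr m p q r : eqm m p q -> eqm m (p * r) (q * r).
Proof.
move=> H i Hi; rewrite !coefM; apply: eq_bigr => j _; rewrite H //.
have := ltn_ord j; lia.
Qed.

Lemma eqm_trans m p q r : eqm m p q -> eqm m q r -> eqm m p r.
Proof. by move=> H1 H2 i Hi; rewrite H1 // H2. Qed.

Definition Mp (c : nat) : {poly rat} := c%:R * (1 - 'X) + 2%:R * 'X.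

Lemma step (m c : nat) (e e' : nat -> nat) :
  (forall j, e' j = 2 * \sum_(i < j) e i + c * e j)%N ->
  eqm m (tr m e' * (1 - 'X)) (tr m e * Mp c).
Proof.
move=> H i Hi.
have -> : tr m e * Mp c = (tr m e - tr m e * 'X) *+ c + (tr m e * 'X) *+ 2.
  by rewrite /Mp; ring.
rewrite mulrBr mulr1 !(coefD, coefMn, coefB, coefN, coefMX, coef_poly).
case: i Hi => [|j] Hj /=.
  rewrite H big_ord0 muln0 add0n natrM -mulr_natr; ring.
rewrite !ltnS Hj (ltnW Hj) !H big_ord_recr /=.
rewrite !natrD !natrM ?natrD -mulr_natr; ring.
Qed.

Fixpoint Rp (rw : seq bool) : {poly rat} :=
  match rw with [::] => 1 | b :: rw' => Rp rw' * Mp (b + ~~ st rw') end.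
Fixpoint Lw (rw : seq bool) : nat :=
  match rw with [::] => 0%N | b :: rw' => (Lw rw' + (~~ b && st rw'))%N end.

Lemma eqm_base m : eqm m (tr m (E [::]) * (1 - 'X)) 1.
Proof.
move=> i Hi; rewrite mulrBr mulr1 coefB coefMX !coef_poly coefC /E /=.
case: i Hi => [|j] Hj //=.
by rewrite !ltnS Hj (ltnW Hj) subrr.
Qed.

Lemma eqm_inv rw m : eqm m (tr m (E rw) * (1 - 'X) ^+ (size rw).+1) (Rp rw).
Proof.
elim: rw => [|b rw IH]; first by rewrite expr1; apply: eqm_base.
rewrite /= exprS mulrA.
apply: eqm_trans; first by apply: eqm_mulr; apply: step => j; apply: E_cons.
rewrite mulrAC; exact: eqm_mulr.
Qed.

Lemma Rid rw :
  Rp rw * ((1 + 'X) ^+ 2) ^+ (Lw rw) * (if st rw then 1 else 2%:R) =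
  (1 + 'X) ^+ (size rw + ~~ st rw) * (4%:R * 'X) ^+ (Lw rw).
Proof.
elim: rw => [|b rw IH]; first by rewrite /= !expr0 !mulr1.
rewrite /=; move: IH.
set A := Rp rw; set L := Lw rw; set n := size rw.
rewrite /Mp /st /=.
set C := 1 + 'X; set B := C ^+ 2; set F := 4 * 'X.
case: b; case: (head true rw) => /= IH; rewrite ?natrD.
- rewrite !addn0 in IH *; rewrite exprS.
  apply: (etrans (_ : _ = (A * B ^+ L * 1) * (1 * (1 - 'X) + 2 * 'X))); first by ring.
  rewrite IH /C; ring.
- rewrite !addn0; rewrite addn1 in IH.
  rewrite -IH; ring.
- rewrite addn0 in IH; rewrite !addn1 !exprS.
  apply: (etrans (_ : _ = (A * B ^+ L * 1) * ((0 + 0) * (1 - 'X) + 2 * 'X) * B * 2)); first by ring.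
  rewrite IH /B /C /F; ring.
- rewrite !addn0 addn1; rewrite addn1 in IH; rewrite exprS.
  apply: (etrans (_ : _ = (A * B ^+ L * 2) * ((0 + 1) * (1 - 'X) + 2 * 'X))); first by ring.
  rewrite IH /C; ring.
Qed.


Lemma fps_main rw (F : fps) : st rw -> (forall k, F k = (E rw k)%:R) ->
  fps_eq_frac F ((1 + 'X) ^+ size rw * (4%:R *: 'X) ^+ Lw rw)
    ((1 - 'X) ^+ (size rw).+1 * ((1 + 'X) ^+ 2) ^+ Lw rw).
Proof.
move=> Hst HF; split.
  by rewrite -horner_coef0 !hornerE !expr1n mulr1 oner_neq0.
apply: functional_extensionality => m.
rewrite /fps_mul /fps_of_poly.
have -> : \sum_(i < m.+1) F i * ((1 - 'X) ^+ (size rw).+1 * ((1 + 'X) ^+ 2) ^+ Lw rw)`_(m - i)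
   = (tr m (E rw) * ((1 - 'X) ^+ (size rw).+1 * ((1 + 'X) ^+ 2) ^+ Lw rw))`_m.
  by rewrite coefM; apply: eq_bigr => i _; rewrite coef_poly ltn_ord HF.
rewrite mulrA (@eqm_mulr m _ _ _ (eqm_inv rw m) m (leqnn m)).
have := Rid rw; rewrite Hst mulr1 addn0 => ->.
by rewrite scaler_nat mulr_natl.
Qed.

Local Close Scope ring_scope.

Fixpoint goodF (w : seq bool) (l : seq nat) : bool :=
  match w, l with
  | [::], [:: _] => true
  | b :: w', x :: ((y :: _) as l') => lc b x y && goodF w' l'
  | _, _ => false
  end.

Definition goodR rw rl := goodF (rev rw) (rev rl).

Fixpoint allL (B n : nat) : seq (seq nat) :=
  if n is n'.+1 then [seq x :: l | x <- iota 0 B.+1, l <- allL B n'] else [:: [::]].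

Lemma goodF_size w l : goodF w l -> size l = (size w).+1.
Proof.
elim: w l => [|b w IH] [|x [|y l]] //= /andP [_ H].
by move: (IH _ H) => /= ->.
Qed.

Lemma goodF_rcons w b l x :
  goodF (rcons w b) (rcons l x) = goodF w l && lc b (last 0 l) x.
Proof.
elim: w l => [|b' w IH] [|y [|z l]] //=.
- by rewrite andbT.
- by case: l => [|? ?] /=; rewrite andbF.
- by case: w {IH} => [|? ?] /=; rewrite andbF.
- by rewrite (IH (z :: l)) /= andbA.
Qed.


Lemma goodR_cons b rw x y rs :
  goodR (b :: rw) (x :: y :: rs) = lc b y x && goodR rw (y :: rs).
Proof.
rewrite /goodR !rev_cons goodF_rcons -rev_cons.
by rewrite rev_cons last_rcons andbC.
Qed.

Lemma count_allpairs (P : pred (seq nat)) (s : seq nat) (t : seq (seq nat)) :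
  count P [seq x :: l | x <- s, l <- t] = \sum_(x <- s) count (fun l => P (x :: l)) t.
Proof.
elim: s => [|x s IH]; first by rewrite big_nil.
by rewrite /= count_cat IH big_cons count_map.
Qed.

Lemma count_andl (c : bool) (P : pred (seq nat)) t :
  count (fun l => c && P l) t = c * count P t.
Proof. by case: c => /=; rewrite ?mul1n ?mul0n //; elim: t. Qed.

Lemma allL_S B n : allL B n.+1 = [seq x :: l | x <- iota 0 B.+1, l <- allL B n].
Proof. by []. Qed.

Lemma count_allL rw B v : v <= B ->
  count (fun l => goodR rw (v :: l)) (allL B (size rw)) = S rw v.
Proof.
elim: rw v => [|b rw IH] v Hv; first by [].
rewrite [size _]/= allL_S count_allpairs.
transitivity (\sum_(y <- iota 0 B.+1) lc b y v * S rw y).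
  apply: eq_big_seq => y; rewrite mem_iota => Hy.
  rewrite (eq_count (a2 := fun l => lc b y v && goodR rw (y :: l))); last first.
    by move=> l; rewrite goodR_cons.
  rewrite count_andl IH //; lia.
have -> : iota 0 B.+1 = index_iota 0 B.+1 by rewrite /index_iota subn0.
rewrite big_mkord S_cons -sum_lc (@big_ord_widen _ _ _ v.+1 B.+1 (fun u => lc b u v * S rw u) Hv).
rewrite [RHS]big_mkcond; apply: eq_bigr => i _.
case: ifP => // Hi.
by rewrite ltnS in Hi; rewrite /lc Hi.
Qed.

Lemma goodF_nth w l : size l = (size w).+1 ->
  goodF w l <-> (forall i, i < size w -> lc (nth false w i) (nth 0 l i) (nth 0 l i.+1)).
Proof.
elim: w l => [|b w IH] [|x [|y l]] //=; try lia.
move=> [] Hs; have IH' := IH (y :: l) (ltac:(by rewrite /= Hs)).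
split.
  move=> /andP [H1 H2] [|i] Hi //=; exact: (proj1 IH' H2 i Hi).
move=> H; apply/andP; split; first exact: (H 0).
by apply/IH' => i Hi; apply: (H i.+1).
Qed.

Lemma allL_mem B n l : (l \in allL B n) = (size l == n) && all (fun x => x <= B) l.
Proof.
elim: n l => [|n IH] [|x l] //.
  by rewrite allL_S; apply/negbTE/allpairsP => -[[y t] /= [_ _]].
rewrite allL_S; apply/allpairsP/idP => [[[y t] /= [Hy Ht [-> ->]]] | ].
  rewrite /= eqSS; move: Ht; rewrite IH => /andP [-> ->]; rewrite andbT.
  by move: Hy; rewrite in_cons mem_iota; lia.
rewrite /= => /and3P [Hs Hx Ha]; exists (x, l); split => //.
  by rewrite /= in_cons mem_iota; lia.
by rewrite IH; rewrite eqSS in Hs; rewrite Hs.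
Qed.

Lemma allL_uniq B n : uniq (allL B n).
Proof.
elim: n => [|n IH] //; rewrite allL_S.
apply: allpairs_uniq => //; first exact: iota_uniq.
by move=> [x1 l1] [x2 l2] _ _ /= [-> ->].
Qed.

Lemma count_allL_full rw B :
  count (goodR rw) (allL B (size rw).+1) = \sum_(v < B.+1) S rw v.
Proof.
rewrite allL_S count_allpairs.
have -> : iota 0 B.+1 = index_iota 0 B.+1 by rewrite /index_iota subn0.
rewrite big_mkord; apply: eq_bigr => v _; apply: count_allL.
by rewrite -ltnS.
Qed.

Lemma sum_E rw k : \sum_(v < (2 * k).+1) S rw v = E (true :: rw) k.
Proof. by rewrite /E S_cons big_ord_recr /= /par oddM /= mul1n. Qed.

Set Implicit Arguments. Unset Strict Implicit.

Definition lw n (s : 'S_n) : seq bool := [seq (pv s i < pv s i.+1) | i <- iota 1 n.-1].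
Definition lmap n k (a : {ffun 'I_n -> Zk k}) : seq nat := [seq (a i : nat) | i <- enum 'I_n].

Lemma pvE n (s : 'S_n) (i : 'I_n) : pv s i.+1 = (s i).+1.
Proof.
rewrite /pv /= nth_cat size_map size_enum_ord ltn_ord.
by rewrite (nth_map i) ?size_enum_ord // nth_ord_enum.
Qed.

Lemma lenr_lc k b (x y : Zk k) : lenr_cond b x y = lc b x y.
Proof. by []. Qed.

Lemma nth_lmap n k (a : {ffun 'I_n -> Zk k}) (i : 'I_n) : nth 0 (lmap a) i = a i.
Proof. by rewrite /lmap (nth_map i) ?size_enum_ord // nth_ord_enum. Qed.

Lemma size_lw n (s : 'S_n) : size (lw s) = n.-1.
Proof. by rewrite /lw size_map size_iota. Qed.

Lemma nth_lw n (s : 'S_n) i : i < n.-1 -> nth false (lw s) i = (pv s i.+1 < pv s i.+2).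
Proof. by move=> Hi; rewrite /lw (nth_map 0) ?size_iota // nth_iota. Qed.

Lemma pair_cond n (s : 'S_n) k (I J : 'I_n) (x y : Zk k) : val J = (val I).+1 ->
  ((pv s (val I).+1 < pv s (val J).+1) ==> lenr_cond true x y) &&
  ((pv s (val J).+1 < pv s (val I).+1) ==> lenr_cond false x y)
  = lc (pv s (val I).+1 < pv s (val J).+1) x y.
Proof.
move=> HJ; rewrite !pvE !ltnS !lenr_lc.
have HIJ : s I != s J.
  apply/negP => /eqP /perm_inj HE; move: HJ; rewrite HE; lia.
case: (ltngtP (s I) (s J)) => H //=; first by rewrite andbT.
by move: HIJ; rewrite -val_eqE /= H eqxx.
Qed.

Lemma pair_cond' n (s : 'S_n) k i (Hi1 : i < n) (Hi2 : i.+1 < n) (x y : Zk k) :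
  ((pv s i.+1 < pv s i.+2) ==> lenr_cond true x y) &&
  ((pv s i.+2 < pv s i.+1) ==> lenr_cond false x y)
  = lc (pv s i.+1 < pv s i.+2) x y.
Proof. exact: (@pair_cond n s k (Ordinal Hi1) (Ordinal Hi2)). Qed.

Lemma cnd_good n (s : 'S_n) k (a : {ffun 'I_n -> Zk k}) : 0 < n ->
  [forall i : 'I_n, forall j : 'I_n, (val j == (val i).+1) ==>
        let asc := (pv s (val i).+1 < pv s (val j).+1)%N in
        let desc := (pv s (val j).+1 < pv s (val i).+1)%N in
        (asc ==> lenr_cond true (a i) (a j)) &&
        (desc ==> lenr_cond false (a i) (a j))]
  = goodF (lw s) (lmap a).
Proof.
move=> Hn.
have Hsz : size (lmap a) = (size (lw s)).+1.
  by rewrite /lmap size_map size_enum_ord size_lw; lia.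
apply/idP/idP.
  move=> H; apply/(goodF_nth _ _ Hsz) => i; rewrite size_lw => Hi.
  have Hi1 : i < n by lia.
  have Hi2 : i.+1 < n by lia.
  have := forallP (forallP H (Ordinal Hi1)) (Ordinal Hi2).
  rewrite /= eqxx /= (@pair_cond' n s k _ Hi1 Hi2) => Hc.
  rewrite nth_lw // (_ : i = val (Ordinal Hi1)) // nth_lmap.
  by rewrite (_ : (val (Ordinal Hi1)).+1 = val (Ordinal Hi2)) // nth_lmap.
move=> /(goodF_nth _ _ Hsz) H; apply/forallP => I; apply/forallP => J; apply/implyP => /eqP HJ.
have Hi1 := ltn_ord I.
have Hi2 : (val I).+1 < n by rewrite -HJ ltn_ord.
rewrite /= HJ (@pair_cond' n s k _ Hi1 Hi2).
have Hi : val I < size (lw s) by rewrite size_lw; lia.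
have := H _ Hi; rewrite nth_lw; last by rewrite -(size_lw s).
have -> : nth 0 (lmap a) (val I) = a I by exact: nth_lmap.
have -> : nth 0 (lmap a) (val I).+1 = a J by rewrite -HJ; exact: nth_lmap.
by [].
Qed.

Lemma card_count (T : finType) (P : pred T) : #|[set a | P a]| = count P (enum T).
Proof. by rewrite enumT cardsE cardE /enum_mem size_filter. Qed.

Lemma omega_E n (s : 'S_n) k : 0 < n -> omega_l s k = E (true :: rev (lw s)) k.
Proof.
move=> Hn; rewrite /omega_l card_count.
rewrite (eq_count (a2 := fun a => goodF (lw s) (lmap a))); last by move=> a; exact: cnd_good.
have Hsz : (size (rev (lw s))).+1 = n by rewrite size_rev size_lw; lia.
rewrite -sum_E -count_allL_full Hsz.
rewrite (eq_count (a2 := fun a => goodR (rev (lw s)) (rev (lmap a)))); last first.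
  by move=> a; rewrite /goodR !revK.
rewrite -(count_map (fun a => rev (lmap a))).
have Hperm : perm_eq [seq rev (lmap a) | a <- enum {ffun 'I_n -> Zk k}] (allL (2 * k) n).
  apply: uniq_perm; last first.
  - move=> l; apply/mapP/idP.
      move=> [a _ ->]; rewrite allL_mem size_rev /lmap size_map size_enum_ord eqxx /= all_rev.
        by apply/allP => x /mapP [i _ ->] /=; rewrite -ltnS ltn_ord.
    rewrite allL_mem => /andP [/eqP Hs Ha].
    exists [ffun i : 'I_n => (inord (nth 0 (rev l) i) : Zk k)]; first by rewrite mem_enum.
    rewrite -[LHS]revK; congr rev.
    apply: (@eq_from_nth _ 0); first by rewrite size_rev /lmap size_map size_enum_ord.
    move=> i; rewrite size_rev Hs => Hi.
    rewrite (_ : i = val (Ordinal Hi)) // nth_lmap ffunE inordK //.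
    have : all (fun x => x <= 2 * k) (rev l) by rewrite all_rev.
    move/allP => /(_ (nth 0 (rev l) i)); rewrite mem_nth ?size_rev ?Hs // => /(_ isT) H; rewrite ltnS; exact: H.
  - exact: allL_uniq.
  rewrite map_inj_uniq ?enum_uniq // => a1 a2 /(can_inj revK) H.
  by apply/ffunP => i; apply: ord_inj; rewrite -!nth_lmap H.
by move/seq.permP: Hperm => ->.
Qed.

Set Implicit Arguments. Unset Strict Implicit.

Fixpoint Lf (prev : bool) (w : seq bool) : nat :=
  match w with [::] => 0 | b :: w' => (prev && ~~ b) + Lf b w' end.

Lemma Lw_catrev w r : Lw (catrev w r) = (Lw r + Lf (st r) w)%N.
Proof.
elim: w r => [|b w IH] r /=; first by rewrite addn0.
rewrite IH /= andbC; lia.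
Qed.

Lemma pv_neq n (s : 'S_n) i : 0 < i -> i < n -> pv s i != pv s i.+1.
Proof.
case: i => [|j] // _ Hj.
have Hj1 : j < n by lia.
rewrite (pvE s (Ordinal Hj1)) (pvE s (Ordinal Hj)) eqSS.
apply/negP => /eqP /ord_inj /perm_inj [] /eqP; lia.
Qed.

Lemma lpe_gen n (s : 'S_n) i len : 0 < i -> i + len <= n ->
  count (fun i => (pv s i.-1 < pv s i) && (pv s i.+1 < pv s i)) (iota i len) =
  Lf (pv s i.-1 < pv s i) [seq (pv s j < pv s j.+1) | j <- iota i len].
Proof.
elim: len i => [|len IH] i Hi Hl //=.
rewrite IH //; last by lia.
congr (_ + _); congr (nat_of_bool (_ && _)).
have := pv_neq s Hi (ltac:(lia)).
rewrite ltnNge leq_eqVlt negb_or => H.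
by case: ltngtP H.
Qed.

Lemma lpe_Lw n (s : 'S_n) : 0 < n -> lpe s = Lw (true :: rev (lw s)).
Proof.
move=> Hn; rewrite /lpe lpe_gen //; last by lia.
rewrite /= /rev Lw_catrev /= add0n addn0.
case: n s Hn => [|n] s //= _.
by rewrite (pvE s ord0).
Qed.

End Aux.
Import Aux.
Local Open Scope ring_scope.


Theorem theorem4p6 (n : nat) (s : 'S_n) :
  fps_eq_frac (fun k => (omega_l s k)%:R)
    ((1 + 'X) ^+ n * (4%:R *: 'X) ^+ lpe s)
    ((1 - 'X) ^+ n.+1 * ((1 + 'X) ^+ 2) ^+ lpe s).
Proof.
case: n s => [|n] s.
  apply: (@fps_main [::]) => // k.
  rewrite /E /=; congr (_ %:R).
  rewrite /omega_l card_count (eq_count (a2 := predT)) ?count_predT.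
    by rewrite -cardE card_ffun (card_ord 0) expn0.
  by move=> a; apply/forallP => -[].
have Hn : (0 < n.+1)%N by [].
have := @fps_main (true :: rev (lw s)) (fun k => (omega_l s k)%:R) erefl.
rewrite /= size_rev size_lw /= (_ : (Lw (rev (lw s)) + 0)%N = lpe s).
  by apply => k; rewrite omega_E.
by rewrite (lpe_Lw s Hn) /=.
Qed.
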